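(* Let $f:\mathbb{R}^d\to\mathbb{R}$ be convex and differentiable with $L$-Lipschitz gradient ($L>0$), let $h:\mathbb{R}^d\to\mathbb{R}\cup\{+\infty\}$ be proper, closed and convex, let $F=f+h$, and assume $F$ has bounded level sets and a minimizer $x^*$. (a) For every $x\in\mathbb{R}^d$, the value $\lambda=1/(3L)$ satisfies the linesearch condition $\mathrm{(LS)}(x,\lambda)$. (b) Let $x_0\in\mathbb{R}^d$ and define iteratively $x_{k+1}=x_k-\lambda_k G^{f}_{\lambda_k h}(x_k)$, where $\lambda_k=\max\{\lambda>0:\ \mathrm{(LS)}(x_k,\lambda)\text{ holds}\}$ (assumed to be attained). Then $\lambda_k\ge 1/(3L)$ for all $k$, and there is a constant $D$ depending only on $x_0$, $x^*$ and $L$ such that $F(x_k)-F(x^* )\le D/k$ for all $k\ge1$.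
   Context: $\mathbb{R}^d$ carries the standard inner product $\langle\cdot,\cdot\rangle$ and Euclidean norm $\|\cdot\|$. For $\lambda>0$ the proximal operator is $\mathrm{prox}_{\lambda h}(w)=\arg\min_{u\in\mathbb{R}^d}\big\{\lambda h(u)+\tfrac12\|u-w\|^2\big\}$. The gradient mapping is $G^{f}_{\lambda h}(x)=\frac{1}{\lambda}\Big(x-\mathrm{prox}_{\lambda h}\big(x-\lambda\nabla f(x)\big)\Big)$. For $x\in\mathbb{R}^d$ and $\lambda>0$, the linesearch condition $\mathrm{(LS)}(x,\lambda)$ is: with $G=G^{f}_{\lambda h}(x)$, $f(x-2\lambda G)\le f(x-\lambda G)-\lambda\langle G,\nabla f(x)\rangle+\tfrac{\lambda}{2}\|G\|^2$. *)

(* Defs.v *)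
From HB Require Import structures.
From mathcomp Require Import all_boot all_order all_algebra.
From mathcomp Require Import all_classical all_reals all_analysis.
Set Implicit Arguments. Unset Strict Implicit. Unset Printing Implicit Defensive.
Import Order.TTheory GRing.Theory Num.Theory.
Import numFieldNormedType.Exports.
Local Open Scope classical_set_scope.
Local Open Scope ring_scope.

Section Defs.
Variables (R : realType) (d : nat).
Notation vec := 'rV[R]_d.

Definition dotv (u v : vec) : R := \sum_(i < d) u ord0 i * v ord0 i.
Definition enorm (u : vec) : R := Num.sqrt (dotv u u).

Definition has_gradient (f : vec -> R) (gf : vec -> vec) : Prop :=
  forall x, differentiable f x /\ forall v, 'd f x v = dotv (gf x) v.

Definition convex_fun (f : vec -> R) : Prop :=
  forall (x y : vec) (t : R), 0 <= t <= 1 ->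
    f (t *: x + (1 - t) *: y) <= t * f x + (1 - t) * f y.

Definition lipschitz_grad (gf : vec -> vec) (L : R) : Prop :=
  forall x y, enorm (gf x - gf y) <= L * enorm (x - y).

Definition proper_fun (h : vec -> \bar R) : Prop :=
  (exists x, h x < +oo)%E /\ (forall x, -oo < h x)%E.

(* closed = lower semicontinuous = all sublevel sets closed *)
Definition closed_fun (h : vec -> \bar R) : Prop :=
  forall t : R, closed [set x | (h x <= t%:E)%E].

Definition convex_efun (h : vec -> \bar R) : Prop :=
  forall (x y : vec) (t : R), 0 < t < 1 ->
    (h (t *: x + (1 - t) *: y)%R <= t%:E * h x + (1 - t)%:E * h y)%E.

Definition is_prox (h : vec -> \bar R) (lam : R) (w p : vec) : Prop :=
  forall u, (lam%:E * h p + (2^-1 * enorm (p - w) ^+ 2)%:E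
             <= lam%:E * h u + (2^-1 * enorm (u - w) ^+ 2)%:E)%E.

(* prox_{lam h}(w): the (unique, under the standing assumptions) argmin *)
Definition prox (h : vec -> \bar R) (lam : R) (w : vec) : vec :=
  xget 0 [set p | is_prox h lam w p].

Definition grad_map (gf : vec -> vec) (h : vec -> \bar R) (lam : R) (x : vec)
  : vec := lam^-1 *: (x - prox h lam (x - lam *: gf x)).

Definition LS (f : vec -> R) (gf : vec -> vec) (h : vec -> \bar R)
  (x : vec) (lam : R) : Prop :=
  let G := grad_map gf h lam x in
  f (x - (2 * lam) *: G) <=
    f (x - lam *: G) - lam * dotv G (gf x) + lam / 2 * enorm G ^+ 2.

Definition Fsum (f : vec -> R) (h : vec -> \bar R) (x : vec) : \bar R :=
  ((f x)%:E + h x)%E.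

Definition bounded_level_sets (F : vec -> \bar R) : Prop :=
  forall t : R, exists M : R, forall x, (F x <= t%:E)%E -> enorm x <= M.

End Defs.

(* Main.v *)
Require Import Defs.
From HB Require Import structures.
From mathcomp Require Import all_boot all_order all_algebra.
From mathcomp Require Import all_classical all_reals all_analysis.
From mathcomp Require Import ring lra.
Import Order.TTheory GRing.Theory Num.Theory.
Import numFieldNormedType.Exports.
Local Open Scope classical_set_scope.
Local Open Scope ring_scope.

Section S.
Variables (R : realType) (d : nat).
Notation vec := 'rV[R]_d.

Lemma aff_diff (z v : vec) (s : R) :
  is_diff s (fun s : R => s *: v + z) (fun s : R => s *: v).
Proof.
have H := @is_diffD R R vec ( *:%R ^~ v) (cst z) ( *:%R ^~ v) 0 s _ _.
rewrite addr0 in H.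
exact: H.
Qed.
Lemma line_deriv (f : vec -> R) gf (z v : vec) (t : R) :
  has_gradient f gf ->
  derivable (fun s : R => f (s *: v + z)) t 1 /\
  derive1 (fun s : R => f (s *: v + z)) t = dotv (gf (t *: v + z)) v.
Proof.
move=> hg.
have da := aff_diff z v t.
have [df dfv] := hg (t *: v + z).
have dg : differentiable (f \o (fun s : R => s *: v + z)) t.
  by apply: differentiable_comp.
split; first exact/derivable1_diffP.
rewrite (derive1E' dg) (@diff_comp _ _ _ _ (fun s : R => s *: v + z) f t) //= diff_val scale1r.
exact: dfv.
Qed.
Lemma quad_bound (g g' : R -> R) (c : R) :
  (forall t : R, is_derive t (1:R) g (g' t)) ->
  (forall t, 0 <= t <= 1 -> g' t - g' 0 <= c * t) ->
  g 1 <= g 0 + g' 0 + c / 2.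
Proof.
move=> dg hc.
set a := g' 0; set k := c / 2.
pose phi := g - a *: (@id R) - k *: ((@id R) * (@id R)).
have dphi : forall t : R, is_derive t (1:R) phi (g' t - a *: 1 - k *: (t *: 1 + t *: 1)).
  move=> t; rewrite /phi.
  have h1 : is_derive t (1:R) (a *: (@id R)) (a *: 1) by apply: is_deriveZ.
  have h2 : is_derive t (1:R) ((@id R) * (@id R)) (t *: 1 + t *: 1).
    exact: (@is_deriveM _ _ (@id R) (@id R) t 1 1 1 _ _).
  have h3 := is_deriveZ k h2.
  have h4 := is_deriveB (dg t) h1.
  exact: is_deriveB h4 h3.
have der : forall t, derivable phi t 1 by move=> t; have [] := dphi t.
have key : {in `[0, 1]%R &, {homo phi : x y /~ x <= y}}.
  apply: ler0_derive1_le_cc.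
  - by move=> x _; exact: der.
  - move=> x; rewrite in_itv /= => /andP[x0 x1].
    rewrite derive1E derive_val.
    have := hc x; rewrite (ltW x0) (ltW x1) => /(_ isT) h.
    rewrite /k /a; rewrite /GRing.scale /=; lra.
  - apply: derivable_within_continuous => x _; exact: der.
have := key 1 0; rewrite !in_itv /= !lexx ler01 /= => /(_ isT isT isT).
rewrite /phi /a /k => H.
have : g 1 - g' 0 * 1 - c / 2 * (1 * 1) <= g 0 - g' 0 * 0 - c / 2 * (0 * 0) by exact: H.
lra.
Qed.

Lemma dotvC (u v : vec) : dotv u v = dotv v u.
Proof. by rewrite /dotv; apply: eq_bigr => i _; rewrite mulrC. Qed.

Lemma dotvDl (u w v : vec) : dotv (u + w) v = dotv u v + dotv w v.
Proof. by rewrite /dotv -big_split; apply: eq_bigr => i _; rewrite !mxE mulrDl. Qed.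

Lemma dotvZl (a : R) (u v : vec) : dotv (a *: u) v = a * dotv u v.
Proof. by rewrite /dotv mulr_sumr; apply: eq_bigr => i _; rewrite !mxE mulrA. Qed.

Lemma dotvNl (u v : vec) : dotv (- u) v = - dotv u v.
Proof. by rewrite -scaleN1r dotvZl mulN1r. Qed.

Lemma dotvBl (u w v : vec) : dotv (u - w) v = dotv u v - dotv w v.
Proof. by rewrite dotvDl dotvNl. Qed.

Lemma dotvDr (v u w : vec) : dotv v (u + w) = dotv v u + dotv v w.
Proof. by rewrite dotvC dotvDl !(dotvC v). Qed.

Lemma dotvZr (a : R) (v u : vec) : dotv v (a *: u) = a * dotv v u.
Proof. by rewrite dotvC dotvZl dotvC. Qed.

Lemma dotvNr (v u : vec) : dotv v (- u) = - dotv v u.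
Proof. by rewrite dotvC dotvNl dotvC. Qed.

Lemma dotvBr (v u w : vec) : dotv v (u - w) = dotv v u - dotv v w.
Proof. by rewrite dotvDr dotvNr. Qed.

Lemma dotv0l (v : vec) : dotv 0 v = 0.
Proof. by rewrite /dotv big1 // => i _; rewrite mxE mul0r. Qed.

Lemma dotv_ge0 (u : vec) : 0 <= dotv u u.
Proof. by rewrite /dotv sumr_ge0 // => i _; rewrite -expr2 sqr_ge0. Qed.

Lemma enorm2 (u : vec) : enorm u ^+ 2 = dotv u u.
Proof. by rewrite /enorm sqr_sqrtr // dotv_ge0. Qed.

Lemma enorm_ge0 (u : vec) : 0 <= enorm u.
Proof. exact: sqrtr_ge0. Qed.

Lemma coord_le (u : vec) i : `|u ord0 i| <= enorm u.
Proof.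
rewrite -(ger0_norm (enorm_ge0 u)) -ler_sqr ?inE ?normr_ge0 // !real_normK ?num_real //.
rewrite enorm2 /dotv (bigD1 i) //= -expr2 lerDl sumr_ge0 // => j _.
by rewrite -expr2 sqr_ge0.
Qed.

Lemma mxnorm_le (u : vec) : `|u| <= enorm u.
Proof.
have -> : `|u| = mx_norm u by [].
rewrite mx_normrE; apply: bigmax_le => [|ij _].
  exact: enorm_ge0.
by rewrite (ord1 ij.1); apply: coord_le.
Qed.

Lemma dotv_eq0 (u w : vec) : dotv u u = 0 -> dotv u w = 0.
Proof.
move=> h.
have e0 : enorm u = 0 by rewrite /enorm h sqrtr0.
have hi : forall i, u ord0 i = 0.
  by move=> i; apply/eqP; rewrite -normr_le0 -e0 coord_le.
by rewrite /dotv big1 // => i _; rewrite hi mul0r.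
Qed.

Lemma CS (u v : vec) : dotv u v <= enorm u * enorm v.
Proof.
set a := enorm u; set b := enorm v.
have a0 : 0 <= a by exact: enorm_ge0.
have b0 : 0 <= b by exact: enorm_ge0.
have [az|anz] := eqVneq a 0.
  rewrite az mul0r dotv_eq0 //.
  by rewrite -enorm2 -/a az expr0n.
have [bz|bnz] := eqVneq b 0.
  rewrite bz mulr0 dotvC dotv_eq0 //.
  by rewrite -enorm2 -/b bz expr0n.
have := dotv_ge0 (b *: u - a *: v).
rewrite !(dotvBl, dotvBr, dotvZl, dotvZr) -!enorm2 -/a -/b (dotvC v u) => h.
have ha : 0 < a by rewrite lt_def anz.
have hb : 0 < b by rewrite lt_def bnz.
have hab : 0 < a * b by apply: mulr_gt0.
rewrite -(ler_pM2l hab).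
nra.
Qed.

Lemma enormZ (a : R) (u : vec) : enorm (a *: u) = `|a| * enorm u.
Proof.
by rewrite /enorm dotvZl dotvZr mulrA -expr2 sqrtrM ?sqr_ge0 // sqrtr_sqr.
Qed.

Lemma is_derive_line (f : vec -> R) gf (z v : vec) (t : R) :
  has_gradient f gf ->
  is_derive t (1:R) (fun s : R => f (s *: v + z)) (dotv (gf (t *: v + z)) v).
Proof.
move=> hg; have [h1 h2] := @line_deriv f gf z v t hg.
by apply: DeriveDef => //; rewrite -derive1E.
Qed.

Lemma descent (f : vec -> R) gf L (z v : vec) :
  has_gradient f gf -> lipschitz_grad gf L ->
  f (v + z) <= f z + dotv (gf z) v + L / 2 * enorm v ^+ 2.
Proof.
move=> hg hl.
have := @quad_bound (fun s : R => f (s *: v + z))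
  (fun s => dotv (gf (s *: v + z)) v) (L * enorm v ^+ 2)
  (fun t => @is_derive_line f gf z v t hg).
rewrite /= scale1r scale0r add0r.
have -> : L * enorm v ^+ 2 / 2 = L / 2 * enorm v ^+ 2 by rewrite mulrAC.
apply => t /andP[t0 t1].
rewrite -dotvBl.
apply: le_trans; first exact: CS.
have := hl (t *: v + z) z; rewrite addrK enormZ ger0_norm // => h.
have := enorm_ge0 v => hv.
have := ler_wpM2r hv h.
by rewrite expr2; nra.
Qed.

Lemma grad_ineq (f : vec -> R) gf (z y : vec) :
  has_gradient f gf -> convex_fun f ->
  f z + dotv (gf z) (y - z) <= f y.
Proof.
move=> hg hc.
set w := y - z.
pose g := fun s : R => f (s *: w + z).
have [dg dgv] := @line_deriv f gf z w 0 hg.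
rewrite scale0r add0r in dgv.
suff : derive1 g 0 <= g 1 - g 0.
  by rewrite /g dgv scale1r scale0r add0r /w subrK; lra.
rewrite derive1E /derive; apply: limr_le; first exact: dg.
have hn := nbhs_dnbhs_neq (0:R).
have hl := @dnbhs0_lt R R 1 ltr01.
near=> h.
have hnz : h != 0 by near: h.
have hlt : `|h| < 1 by near: h.
rewrite /= addr0 /g scale0r add0r scale1r [h%:A](mulr1).
have -> : w + z = y by rewrite /w subrK.
have [hpos|hneg] := ltP 0 h.
  have h1 : h < 1 by move: hlt; rewrite ger0_norm ?ltW.
  have := hc y z h; rewrite (ltW hpos) (ltW h1) => /(_ isT).
  have -> : h *: y + (1 - h) *: z = h *: w + z.
    by rewrite /w; apply/rowP => i; rewrite !mxE; ring.
  move=> H; rewrite ler_pdivrMl //; lra.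
have hn0 : h < 0 by rewrite lt_neqAle hnz hneg.
have h1 : -1 < h by move: hlt; rewrite ltr0_norm // ltrNl.
set t := (1 - h)^-1.
have ht : 0 < t by rewrite invr_gt0; lra.
have ht1 : t <= 1 by rewrite invf_le1; lra.
have := hc (h *: w + z) (1 *: w + z) t; rewrite (ltW ht) ht1 => /(_ isT).
have -> : t *: (h *: w + z) + (1 - t) *: (1 *: w + z) = z.
  apply/rowP => i; rewrite !mxE /t; field; lra.
rewrite scale1r => H.
have wy : w + z = y by rewrite /w subrK.
rewrite wy in H.
have hne : 1 - h != 0 by rewrite gt_eqF //; lra.
have e : t * (1 - h) = 1 by rewrite /t mulVf.
have K : (1 - h) * f z <= f (h *: w + z) - h * f y.
  have := ler_wpM2l (_ : 0 <= 1 - h) H; rewrite mulrDr !mulrA (mulrC (1 - h) t) e.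
  have -> : (1 - h) * (1 - t) = - h by rewrite mulrBr mulr1 (mulrC (1 - h) t) e; ring.
  by rewrite mul1r; move=> /(_ ltac:(lra)); lra.
have hq : h^-1 * h = 1 by rewrite mulVf.
have hq0 : h^-1 < 0 by rewrite invr_lt0.
have -> : h^-1 *: (f (h *: w + z) - f z) = h^-1 * (f (h *: w + z) - f z) by [].
have K2 : h * (f y - f z) <= f (h *: w + z) - f z by lra.
have := ler_wnM2l (ltW hq0) K2; rewrite mulrA hq mul1r; done.
Unshelve. all: end_near.
Qed.

Lemma LS_any (f : vec -> R) gf L (x G : vec) :
  0 < L -> has_gradient f gf -> lipschitz_grad gf L ->
  f (x - (2 * (3 * L)^-1) *: G) <=
    f (x - (3 * L)^-1 *: G) - (3 * L)^-1 * dotv G (gf x)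
    + (3 * L)^-1 / 2 * enorm G ^+ 2.
Proof.
move=> L0 hg hl.
set lam := (3 * L)^-1.
have lam0 : 0 < lam by rewrite invr_gt0 mulr_gt0.
have hlam : 3 * L * lam = 1 by rewrite mulfV // gt_eqF // mulr_gt0.
have lam0' : 0 <= lam := ltW lam0.
set z := x - lam *: G.
have -> : x - (2 * lam) *: G = (- lam) *: G + z.
  by rewrite /z; apply/rowP => i; rewrite !mxE; ring.
apply: le_trans; first exact: (@descent f gf L z ((- lam) *: G) hg hl).
rewrite enormZ normrN ger0_norm // dotvZr.
have := CS (gf x - gf z) G.
have xz : x - z = lam *: G by rewrite /z opprB addrC subrK.
have := hl x z; rewrite xz enormZ ger0_norm // => h1 h2.
rewrite dotvBl in h2.
have hG := enorm_ge0 G.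
have h3 : dotv (gf x) G - dotv (gf z) G <= L * (lam * enorm G) * enorm G.
  apply: (le_trans h2); apply: ler_wpM2r => //.
rewrite (dotvC G).
have e : L * lam = 3^-1.
  by apply: (mulfI (_ : (3:R) != 0)); rewrite // mulrA hlam mulfV.
have h4 := ler_wpM2l (ltW lam0) h3.
have e2 : L * (lam * enorm G) * enorm G = 3^-1 * enorm G ^+ 2.
  by rewrite -e expr2; ring.
rewrite e2 in h4.
have e3 : L / 2 * (lam * enorm G) ^+ 2 = lam * (3^-1 * enorm G ^+ 2) / 2.
  by rewrite -e; ring.
rewrite e3.
have : lam * (3^-1 * enorm G ^+ 2) / 2 + lam * (3^-1 * enorm G ^+ 2) = lam / 2 * enorm G ^+ 2.
  field.
lra.
move=> ?; lra.
Qed.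

Lemma mul_pinfty (lam : R) : 0 < lam -> (lam%:E * +oo = +oo)%E.
Proof. by move=> l0; rewrite mulry gtr0_sg // mul1e. Qed.

Lemma ext_le (e : \bar R) (lam q t : R) : 0 < lam -> (-oo < e)%E ->
  (lam%:E * e + q%:E <= t%:E)%E <-> ((e < +oo)%E /\ lam * fine e + q <= t).
Proof.
move=> l0; case: e => [r| |] //= _.
  by rewrite -EFinM -EFinD lee_fin; split=> [h|[] //]; split => //; exact: ltry.
by rewrite mul_pinfty // addye //; split=> [|[]].
Qed.

Lemma ext_le1 (e : \bar R) (t : R) : (-oo < e)%E ->
  (e <= t%:E)%E <-> ((e < +oo)%E /\ fine e <= t).
Proof. by case: e => [r| |] //= _; split=> [h|[] //]; split => //; exact: ltry. Qed.

Lemma qcont (w : vec) : continuous (fun u : vec => 2^-1 * enorm (u - w) ^+ 2).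
Proof.
have -> : (fun u : vec => 2^-1 * enorm (u - w) ^+ 2) =
   2^-1 \*: \sum_(i < d) (fun u : vec => (u ord0 i - w ord0 i) * (u ord0 i - w ord0 i)).
  apply/funext => u; rewrite enorm2 fct_sumE /dotv /=.
  by congr (_ * _); apply: eq_bigr => i _; rewrite !mxE.
move=> x; apply: continuousZl_tmp.
elim/big_ind: _ => [|f g cf cg|i _].
- exact: cst_continuous.
- exact: continuousD.
- apply: continuousM; (apply: continuousB; [exact: coord_continuous | exact: cst_continuous]).
Qed.

Lemma sum_closed (h : vec -> \bar R) (lam : R) (w : vec) (t : R) :
  0 < lam -> closed_fun h -> (forall x, -oo < h x)%E ->
  closed [set x | (lam%:E * h x + (2^-1 * enorm (x - w) ^+ 2)%:E <= t%:E)%E].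
Proof.
move=> l0 hc hm p cl.
set q := fun u : vec => 2^-1 * enorm (u - w) ^+ 2.
suff H : forall e, 0 < e -> (h p <= ((t - q p + e) / lam)%:E)%E.
  apply/(ext_le _ _ _ _ l0 (hm p)); split.
    by have [] := (ext_le1 _ _ (hm p)).1 (H 1 ltr01).
  apply/ler_addgt0Pr => e e0.
  have [_] := (ext_le1 _ _ (hm p)).1 (H e e0).
  rewrite ler_pdivlMr // => hb; rewrite -/(q p); lra.
move=> e e0.
apply: (hc ((t - q p + e) / lam)) => B nB.
have nV : nbhs p [set y | q p - e < q y].
  apply: (qcont w p [set r | q p - e < r]); apply: open_nbhs_nbhs; split; first exact: open_gt.
  by rewrite /= gtrBl.
have [y [Hy [By Vy]]] := cl _ (filterI nB nV).
exists y; split => //.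
have [hy1 hy2] := (ext_le _ _ _ _ l0 (hm y)).1 Hy.
apply/(ext_le1 _ _ (hm y)); split => //.
rewrite ler_pdivlMr //; move: Vy hy2; rewrite /= -/(q y); lra.
Qed.

Lemma nested_pt (B : R -> set vec) :
  (forall e, 0 < e -> closed (B e)) ->
  (forall e, 0 < e -> B e !=set0) ->
  (forall e e', 0 < e -> e <= e' -> B e `<=` B e') ->
  bounded_set (B 1) ->
  exists p, forall e, 0 < e -> B e p.
Proof.
move=> hcl hne hmon bnd.
set D := [set e : R | 0 < e].
have FF : Filter (filter_from D B).
  apply: filter_from_filter; first by exists 1; rewrite /D /=.
  move=> i j Di Dj; exists (Num.min i j).
    by rewrite /D /= lt_min; apply/andP.
  move=> x Bx; split.
    by apply: (hmon (Num.min i j)) => //; [rewrite /D /= lt_min; apply/andP | rewrite ge_min lexx].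
  by apply: (hmon (Num.min i j)) => //; [rewrite /D /= lt_min; apply/andP | rewrite ge_min lexx orbT].
have PF : ProperFilter (filter_from D B) by apply: filter_from_proper.
have cpt : compact (B 1) by apply: bounded_closed_compact => //; exact: hcl.
have [p [B1p clp]] := cpt _ PF (ex_intro2 _ _ 1 ltr01 (@subset_refl _ (B 1))).
exists p => e e0.
move: clp; rewrite clusterE => /(_ (B e)) H.
apply: (hcl e e0); apply: H.
by exists e.
Qed.

Lemma lb_quad (k K N : R) : 0 < k -> - (K ^+ 2 / (4 * k)) <= k * N ^+ 2 - K * N.
Proof.
move=> k0.
have e : k * N ^+ 2 - K * N + K ^+ 2 / (4 * k) = (2 * k * N - K) ^+ 2 / (4 * k).
  by field; rewrite gt_eqF.
have : 0 <= (2 * k * N - K) ^+ 2 / (4 * k).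
  by rewrite divr_ge0 ?sqr_ge0 // ltW // mulr_gt0.
lra.
Qed.

Lemma bnd_quad (k K N T : R) : 0 < k -> 0 <= K -> 0 <= N ->
  k * N ^+ 2 - K * N <= T -> N <= 1 + (`|T| + K) / k.
Proof.
move=> k0 K0 N0 h.
have hq : 0 <= (`|T| + K) / k by rewrite divr_ge0 ?addr_ge0 // ltW.
have [N1|N1] := leP N 1; first by lra.
have hT : T <= `|T| by exact: ler_norm.
have hT0 : 0 <= `|T| by exact: normr_ge0.
have h2 : k * N <= `|T| + K.
  have : k * N ^+ 2 <= (`|T| + K) * N by rewrite expr2; nra.
  rewrite expr2 mulrA ler_pM2r //; lra.
have : N <= (`|T| + K) / k by rewrite ler_pdivlMr // mulrC.
lra.
Qed.

Lemma fin_ge (r : R) (e : \bar R) : (r%:E <= e)%E -> (e < +oo)%E -> r <= fine e.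
Proof. by case: e. Qed.

Lemma ext_eq (e : \bar R) (lam q : R) : (-oo < e)%E -> (e < +oo)%E ->
  (lam%:E * e + q%:E = (lam * fine e + q)%:E)%E.
Proof. by case: e. Qed.

Lemma enormN (u : vec) : enorm (- u) = enorm u.
Proof. by rewrite -scaleN1r enormZ normrN normr1 mul1r. Qed.

Lemma sqdist (u w : vec) :
  enorm (u - w) ^+ 2 = enorm u ^+ 2 - 2 * dotv u w + enorm w ^+ 2.
Proof. by rewrite !enorm2 dotvBl !dotvBr (dotvC w u); ring. Qed.

Lemma prox_exists (h : vec -> \bar R) (lam : R) (w : vec) (a beta : R) (c : vec) :
  0 < lam -> lam * beta < 1 -> proper_fun h -> closed_fun h ->
  (forall u, ((a + dotv c u - beta / 2 * enorm u ^+ 2)%:E <= h u)%E) ->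
  exists p, is_prox h lam w p.
Proof.
move=> l0 lb [[x0 hx0] hm] hc hlow.
set q := fun u : vec => 2^-1 * enorm (u - w) ^+ 2.
set phi := fun u : vec => lam * fine (h u) + q u.
set k := (1 - lam * beta) / 2.
have k0 : 0 < k by rewrite /k divr_gt0 //; lra.
set K := enorm (lam *: c - w).
have K0 : 0 <= K := enorm_ge0 _.
set c0 := lam * a + 2^-1 * enorm w ^+ 2.
have philb : forall u, (h u < +oo)%E ->
    c0 + (k * enorm u ^+ 2 - K * enorm u) <= phi u.
  move=> u hu.
  have h1 := fin_ge _ _ (hlow u) hu.
  have h2 := CS (- u) (lam *: c - w).
  rewrite enormN dotvNl dotvBr dotvZr (dotvC u c) in h2.
  rewrite /phi /q sqdist /c0 /k -/K.
  have := ler_wpM2l (ltW l0) h1.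
  rewrite -/K in h2; move=> h3; nra.
have Sne : [set r | exists u, (h u < +oo)%E /\ r = phi u] !=set0.
  by exists (phi x0); exists x0.
have Slb : has_lbound [set r | exists u, (h u < +oo)%E /\ r = phi u].
  exists (c0 - K ^+ 2 / (4 * k)) => r [u [hu ->]].
  have := philb u hu; have := lb_quad k K (enorm u) k0; lra.
set S := [set r | exists u, (h u < +oo)%E /\ r = phi u].
set mu := inf S.
pose B := fun e : R => [set u | (lam%:E * h u + (q u)%:E <= (mu + e)%:E)%E].
have hB : forall e u, B e u <-> (h u < +oo)%E /\ phi u <= mu + e.
  by move=> e u; rewrite /B /=; apply: ext_le => //.
have [p Bp] : exists p, forall e, 0 < e -> B e p.
  apply: nested_pt.
  - by move=> e _; apply: sum_closed.
  - move=> e e0; have [r [u [hu ->]] hr] := inf_adherent e0 (conj Sne Slb).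
    by exists u; apply/hB; split => //; apply: ltW.
  - move=> e e' _ ee' u /hB [hu hle]; apply/hB; split => //; lra.
  - exists (1 + (`|mu + 1 - c0| + K) / k); split; first exact: num_real.
    move=> M hM u /hB [hu hle]; apply: (le_trans (mxnorm_le u)).
    apply: ltW; apply: le_lt_trans hM.
    apply: bnd_quad => //; first exact: enorm_ge0.
    have := philb u hu; lra.
have [hp _] := (hB 1 p).1 (Bp 1 ltr01).
have phip : phi p <= mu.
  apply/ler_addgt0Pr => e e0; by have [] := (hB e p).1 (Bp e e0).
exists p => u.
rewrite (ext_eq _ _ _ _ hp) //.
have [hu|hu] := ltP (h u) +oo%E.
  rewrite (ext_eq _ _ _ _ hu) // lee_fin.
  apply: (le_trans phip); apply: ge_inf => //.
  by exists u.
move: hu; rewrite leye_eq => /eqP ->.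
by rewrite mul_pinfty // addye // leey.
Qed.

Lemma small_t (A b : R) : 0 <= b -> (forall t, 0 < t < 1 -> 0 <= A + t * b) -> 0 <= A.
Proof.
move=> b0 H; rewrite leNgt; apply/negP => A0.
set t := (- A) / (2 * (b - A)).
have d0 : 0 < 2 * (b - A) by lra.
have t0 : 0 < t by rewrite /t divr_gt0 //; lra.
have et : t * (2 * (b - A)) = - A by rewrite /t mulfVK // gt_eqF.
have t1 : t < 1 by nra.
have := H t; rewrite t0 t1 => /(_ isT).
nra.
Qed.

Lemma sq_line (x y : vec) (t : R) :
  enorm (x + t *: y) ^+ 2 = enorm x ^+ 2 + 2 * t * dotv x y + t ^+ 2 * enorm y ^+ 2.
Proof.
by rewrite !enorm2 dotvDl !dotvDr !dotvZl !dotvZr (dotvC y x); ring.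
Qed.

Lemma prox_ineq (h : vec -> \bar R) (lam : R) (w p : vec) :
  0 < lam -> proper_fun h -> convex_efun h -> is_prox h lam w p ->
  (h p < +oo)%E /\ forall u, (h u < +oo)%E ->
    lam * fine (h p) + dotv (w - p) (u - p) <= lam * fine (h u).
Proof.
move=> l0 [[x0 hx0] hm] hcv hp.
have hpf : (h p < +oo)%E.
  have := hp x0; rewrite (ext_eq _ _ _ (hm x0) hx0) => H.
  by have [] := (ext_le _ _ _ _ l0 (hm p)).1 H.
split => // u hu.
set fp := fine (h p); set fu := fine (h u).
rewrite -subr_ge0.
apply: (@small_t _ (2^-1 * enorm (u - p) ^+ 2)).
  by rewrite mulr_ge0 // ?sqr_ge0 // invr_ge0.
move=> t /andP[t0 t1].
set ut := t *: u + (1 - t) *: p.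
have hut := hcv u p t; rewrite t0 t1 /= in hut; move: (hut isT) => {}hut.
rewrite -(fineK (_ : h u \is a fin_num)) in hut; last first.
  by rewrite fin_numE; apply/andP; split; [rewrite gt_eqF //| rewrite lt_eqF].
rewrite -(fineK (_ : h p \is a fin_num)) in hut; last first.
  by rewrite fin_numE; apply/andP; split; [rewrite gt_eqF //| rewrite lt_eqF].
rewrite -!EFinM -EFinD in hut.
have [hut1 hut2] := (ext_le1 _ _ (hm ut)).1 hut.
have := hp ut.
rewrite (ext_eq _ _ _ (hm p) hpf) (ext_eq _ _ _ (hm ut) hut1) lee_fin.
have -> : ut - w = (p - w) + t *: (u - p).
  by rewrite /ut; apply/rowP => i; rewrite !mxE; ring.
rewrite sq_line => H.
have H2 : 0 <= t * (lam * fu - (lam * fp + dotv (w - p) (u - p)) + t * (2^-1 * enorm (u - p) ^+ 2)).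
  have e1 : dotv (p - w) (u - p) = - dotv (w - p) (u - p).
    by rewrite -dotvNl opprB.
  rewrite -/fp -/fu e1 in H.
  have := ler_wpM2l (ltW l0) hut2.
  rewrite -/fu -/fp; move=> H3; nra.
have := H2; rewrite pmulr_rge0 //.
Qed.

Lemma prox_all (f : vec -> R) gf h L xstar :
  0 < L -> has_gradient f gf -> lipschitz_grad gf L ->
  proper_fun h -> closed_fun h -> convex_efun h ->
  (forall x, (Fsum f h xstar <= Fsum f h x)%E) ->
  forall lam w, 0 < lam -> is_prox h lam w (prox h lam w).
Proof.
move=> L0 hg hl hpr hcl hcv hmin.
have [[x0 hx0] hm] := hpr.
have hsf : (h xstar < +oo)%E.
  have := hmin x0; rewrite /Fsum.
  case: (h xstar) (hm xstar) => [r| |] //= _.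
  rewrite addey // leye_eq; case: (h x0) hx0 (hm x0) => [s| |] //.
set Fs := f xstar + fine (h xstar).
have low1 : forall u, (((Fs - f 0) + dotv (- gf 0) u - L / 2 * enorm u ^+ 2)%:E <= h u)%E.
  move=> u.
  have := hmin u; rewrite /Fsum.
  have := @descent f gf L 0 u hg hl; rewrite addr0 dotvNl.
  case: (h u) (hm u) => [r| |] //= _; last by move=> _ _; rewrite leey.
  rewrite -(fineK (_ : h xstar \is a fin_num)); last first.
    by rewrite fin_numE; apply/andP; split; [rewrite gt_eqF //| rewrite lt_eqF].
  rewrite -!EFinD !lee_fin /Fs; lra.
set lam0 := (2 * L)^-1.
have lam00 : 0 < lam0 by rewrite invr_gt0 mulr_gt0.
have lam0L : lam0 * L < 1.
  have e : lam0 * L = 2^-1 by rewrite /lam0; field; rewrite gt_eqF.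
  rewrite e; lra.
have [p0 hp0] := prox_exists h lam0 0 _ _ _ lam00 lam0L hpr hcl low1.
have [hp0f hp0i] := prox_ineq _ _ _ _ lam00 hpr hcv hp0.
have low2 : forall u, ((fine (h p0) - lam0^-1 * dotv (0 - p0) p0 + dotv (lam0^-1 *: (0 - p0)) u - 0 / 2 * enorm u ^+ 2)%:E <= h u)%E.
  move=> u; case: (ltP (h u) +oo%E) => hu; last first.
    by move: hu; rewrite leye_eq => /eqP ->; rewrite leey.
  have := hp0i u hu; rewrite dotvBr dotvZl.
  rewrite -(fineK (_ : h u \is a fin_num)); last first.
    by rewrite fin_numE; apply/andP; split; [rewrite gt_eqF //| rewrite lt_eqF].
  rewrite lee_fin mul0r mul0r subr0 => H.
  have e : lam0^-1 * lam0 = 1 by rewrite mulVf // gt_eqF.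
  have li : 0 <= lam0^-1 by rewrite invr_ge0 ltW.
  have := ler_wpM2l li H.
  rewrite mulrDr mulrA e mul1r mulrA e mul1r mulrBr; lra.
move=> lam w l0.
have lb0 : lam * 0 < 1 by rewrite mulr0 ltr01.
have [p hp] := prox_exists h lam w _ _ _ l0 lb0 hpr hcl low2.
by apply: xgetPex; exists p.
Qed.

Lemma key_step (f : vec -> R) gf h L xstar (x : vec) (lam : R) :
  0 < L -> convex_fun f -> has_gradient f gf -> lipschitz_grad gf L ->
  proper_fun h -> closed_fun h -> convex_efun h ->
  (forall x, (Fsum f h xstar <= Fsum f h x)%E) ->
  0 < lam -> LS f gf h x lam ->
  let p := x - lam *: grad_map gf h lam x in
  (h p < +oo)%E /\
  forall u, (h u < +oo)%E ->
    lam * (f p + fine (h p) - (f u + fine (h u))) <=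
      dotv (x - p) (p - u) + 2^-1 * enorm (x - p) ^+ 2.
Proof.
move=> L0 hcf hg hl hpr hcl hcv hmin l0 hLS p.
set w := x - lam *: gf x.
set q := prox h lam w.
have hq := @prox_all f gf h L xstar L0 hg hl hpr hcl hcv hmin lam w l0.
have l0' : lam != 0 by rewrite gt_eqF.
have pq : p = q.
  by rewrite /p /grad_map -/w -/q scalerA mulfV // scale1r opprB addrC subrK.
have [hqf hqi] := prox_ineq _ _ _ _ l0 hpr hcv hq.
rewrite pq; split => // u hu.
move: hLS; rewrite /LS /grad_map -/w -/q.
set G := lam^-1 *: (x - q).
have e1 : x - lam *: G = q by rewrite /G scalerA mulfV // scale1r opprB addrC subrK.
have e2 : x - (2 * lam) *: G = q + (q - x).
  by rewrite /G scalerA -mulrA mulfV // mulr1; apply/rowP => i; rewrite !mxE; ring.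
have e3 : lam * dotv G (gf x) = dotv (x - q) (gf x) by rewrite /G dotvZl mulrA mulfV // mul1r.
have e4 : lam / 2 * enorm G ^+ 2 = enorm (x - q) ^+ 2 / (2 * lam).
  rewrite /G enormZ exprMn ger0_norm ?invr_ge0 ?ltW //; field => //.
rewrite e1 e2 e3 e4 => hls.
have hc := hcf x (q + (q - x)) 2^-1.
have e5 : 2^-1 *: x + (1 - 2^-1) *: (q + (q - x)) = q.
  by apply/rowP => i; rewrite !mxE; field.
rewrite e5 in hc.
have hc' : f q <= 2^-1 * f x + (1 - 2^-1) * f (q + (q - x)).
  by apply: hc; rewrite invr_ge0 ler0n /= invf_le1 // ler1n.
have hgi := @grad_ineq f gf x u hg hcf.
have hpi := hqi u hu.
have id1 : dotv (w - q) (u - q) = dotv (x - q) (u - q) - lam * dotv (gf x) (u - q).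
  by rewrite /w -!dotvZl -dotvBl; congr dotv; apply/rowP => i; rewrite !mxE; ring.
have id2 : dotv (x - q) (gf x) + dotv (gf x) (u - x) - dotv (gf x) (u - q) = 0.
  by rewrite (dotvC (x - q)) !dotvBr; ring.
have id3 : dotv (x - q) (q - u) = - dotv (x - q) (u - q) by rewrite -dotvNr opprB.
have e6 : lam * (enorm (x - q) ^+ 2 / (2 * lam)) = 2^-1 * enorm (x - q) ^+ 2 by field.
rewrite id1 in hpi.
have hsd : lam * f q <= lam * f x - lam * dotv (x - q) (gf x) + 2^-1 * enorm (x - q) ^+ 2.
  rewrite -e6 -mulrBr -mulrDr; apply: ler_wpM2l; first exact: ltW.
  lra.
have hg2 := ler_wpM2l (ltW l0) hgi.
rewrite mulrDr in hg2.
rewrite id3.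
have := id2; nra.
Qed.

Lemma Fsum_fin (f : vec -> R) h y : (-oo < h y)%E -> (h y < +oo)%E ->
  Fsum f h y = (f y + fine (h y))%:E.
Proof. by rewrite /Fsum; case: (h y). Qed.

Lemma xstar_fin (f : vec -> R) h xstar : proper_fun h ->
  (forall x, (Fsum f h xstar <= Fsum f h x)%E) -> (h xstar < +oo)%E.
Proof.
move=> [[x0 hx0] hm] hmin.
have := hmin x0; rewrite /Fsum.
case: (h xstar) (hm xstar) => [r| |] //= _.
by rewrite addey // leye_eq; case: (h x0) hx0 (hm x0) => [s| |] //.
Qed.
End S.

Theorem theorem2p2 (R : realType) (d : nat) (L : R) (x0 xstar : 'rV[R]_d) :
  exists D : R,
  forall (f : 'rV[R]_d -> R) (gf : 'rV[R]_d -> 'rV[R]_d)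
         (h : 'rV[R]_d -> \bar R),
    0 < L ->
    convex_fun f -> has_gradient f gf -> lipschitz_grad gf L ->
    proper_fun h -> closed_fun h -> convex_efun h ->
    bounded_level_sets (Fsum f h) ->
    (forall x, (Fsum f h xstar <= Fsum f h x)%E) ->
    (* (a) *)
    (forall x, LS f gf h x (3 * L)^-1) /\
    (* (b) *)
    (forall (x : nat -> 'rV[R]_d) (lam : nat -> R),
       x 0%N = x0 ->
       (forall k, 0 < lam k /\ LS f gf h (x k) (lam k) /\
                  forall mu, 0 < mu -> LS f gf h (x k) mu -> mu <= lam k) ->
       (forall k, x k.+1 = x k - lam k *: grad_map gf h (lam k) (x k)) ->
       (forall k, (3 * L)^-1 <= lam k) /\
       (forall k, (1 <= k)%N ->
          (Fsum f h (x k) - Fsum f h xstar <= (D / k%:R)%:E)%E)).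
Proof.
exists (3 * L / 2 * enorm (x0 - xstar) ^+ 2).
move=> f gf h L0 hcf hg hl hpr hcl hcv _ hmin.
have partA : forall x, LS f gf h x (3 * L)^-1.
  by move=> x; rewrite /LS; apply: LS_any.
split => // x lam hx0 hlam hstep.
have lmin0 : 0 < (3 * L)^-1 by rewrite invr_gt0 mulr_gt0.
have lamge : forall k, (3 * L)^-1 <= lam k.
  by move=> k; have [_ [_ H]] := hlam k; apply: H => //; apply: partA.
split => //.
have hm := hpr.2.
have hsf := @xstar_fin R d f h xstar hpr hmin.
set Fr := fun u => f u + fine (h u).
set Fs := Fr xstar.
have KS : forall k, (h (x k.+1) < +oo)%E /\ forall u, (h u < +oo)%E ->
    lam k * (Fr (x k.+1) - Fr u) <=
      dotv (x k - x k.+1) (x k.+1 - u) + 2^-1 * enorm (x k - x k.+1) ^+ 2.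
  move=> k; have [l0 [hls _]] := hlam k.
  have := @key_step R d f gf h L xstar (x k) (lam k) L0 hcf hg hl hpr hcl hcv hmin l0 hls.
  by rewrite /= -hstep.
have E : forall k, lam k * (Fr (x k.+1) - Fs) <=
    2^-1 * (enorm (x k - xstar) ^+ 2 - enorm (x k.+1 - xstar) ^+ 2).
  move=> k; have [_ H] := KS k; apply: le_trans (H _ hsf) _.
  have -> : x k - x k.+1 = (x k - xstar) - (x k.+1 - xstar).
    by apply/rowP => i; rewrite !mxE; ring.
  rewrite sqdist dotvBl -enorm2; lra.
have M : forall k, Fr (x k.+2) <= Fr (x k.+1).
  move=> k; have [_ H] := KS k.+1; have [hd _] := KS k.
  have := H _ hd.
  have -> : x k.+2 - x k.+1 = - (x k.+1 - x k.+2) by rewrite opprB.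
  rewrite dotvNr -enorm2 => H2.
  have l0 := (hlam k.+1).1.
  have : lam k.+1 * (Fr (x k.+2) - Fr (x k.+1)) <= 0.
    apply: le_trans H2 _; have := sqr_ge0 (enorm (x k.+1 - x k.+2)); lra.
  by rewrite pmulr_rle0 // subr_le0.
have Mon : forall i j, (i <= j)%N -> Fr (x j.+1) <= Fr (x i.+1).
  move=> i j; elim: j => [|j IH]; first by rewrite leqn0 => /eqP ->.
  rewrite leq_eqVlt => /orP[/eqP -> //|]; rewrite ltnS => /IH.
  exact: le_trans (M j).
have NN : forall k, 0 <= Fr (x k.+1) - Fs.
  move=> k; have [hd _] := KS k; have := hmin (x k.+1).
  rewrite (@Fsum_fin R d f h _ (hm _) hsf) (@Fsum_fin R d f h _ (hm _) hd) lee_fin /Fs /Fr; lra.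
have S1 : forall n, \sum_(k < n) lam k * (Fr (x k.+1) - Fs) <=
    2^-1 * (enorm (x 0%N - xstar) ^+ 2 - enorm (x n - xstar) ^+ 2).
  elim => [|n IH]; first by rewrite big_ord0 subrr mulr0.
  rewrite big_ord_recr /=; have := E n; lra.
move=> k; case: k => [//|m] _.
have S2 : m.+1%:R * ((3 * L)^-1 * (Fr (x m.+1) - Fs)) <=
    \sum_(k < m.+1) lam k * (Fr (x k.+1) - Fs).
  rewrite (_ : m.+1%:R * _ = \sum_(k < m.+1) ((3 * L)^-1 * (Fr (x m.+1) - Fs))); last by rewrite sumr_const card_ord mulr_natl.
  apply: ler_sum => k _.
  have hk : (k <= m)%N by rewrite -ltnS.
  have := Mon _ _ hk; have := NN m; have := NN k; have := lamge k; nra.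
have hsum := S1 m.+1.
rewrite hx0 in hsum.
have hd := (KS m).1.
rewrite (@Fsum_fin R d f h _ (hm _) hsf) (@Fsum_fin R d f h _ (hm _) hd) -EFinB lee_fin -/(Fr _) -/(Fr xstar) -/Fs.
have k0 : 0 < m.+1%:R :> R by rewrite ltr0n.
rewrite ler_pdivlMr //.
have e : 3 * L * (3 * L)^-1 = 1 by rewrite mulfV // gt_eqF // mulr_gt0.
have := sqr_ge0 (enorm (x m.+1 - xstar)).
have := NN m.
nra.
Qed.
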